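(* Let $\rho:\mathbb{Z}\to[0,\infty)$ be a weight with finite moments, $f,g$ polynomials with $\deg f\le2$, $\deg g\le1$, $f(x+1)\rho(x+1)-f(x)\rho(x)=g(x)\rho(x)$ on $\mathbb{Z}$, and $\rho f$ vanishing at the end points of the support of $\rho$. Let $\{p_n\}$ be the monic orthogonal polynomials for $\rho$ with $\sum_xp_mp_n\rho=h_n\delta_{nm}$, $h_n>0$; let $\mathcal{A}_{\rm l}=g(x)T+f(x)(\Delta+\nabla)$, $c_n:=-\sum_xp_{n+1}(x)(\mathcal{A}_{\rm l}p_n)(x)\rho(x)$, $\omega(x)=f(x+1)\rho(x+1)$, and assume the Pfaffians $\mathrm{Pf}[\sum_x(x^i(x+1)^j-(x+1)^ix^j)\omega(x)]_{i,j=0}^{2n-1}$ are nonzero for all $n\ge1$. Let $Q_{2n+1}=p_{2n+1}$, $Q_{2n}=\sum_{l=0}^n\big(\prod_{j=l}^{n-1}c_{2j+1}/c_{2j}\big)p_{2l}$ and $u_n=c_{2n}$, and set $t_{2m,2m-2}:=-c_{2m-1}/c_{2m-2}$. Then for all $m\ge0$ (with $Q_{-2}=0$ in (3)): (1) $p_{2m+1}(x)=Q_{2m+1}(x)$; (2) $\frac{1}{u_m}\mathcal{A}_{\rm l}Q_{2m+1}(y)=\frac{p_{2m}(y)}{h_{2m}}+t_{2m+2,2m}\frac{p_{2m+2}(y)}{h_{2m+2}}$; (3) $p_{2m}(x)=Q_{2m}(x)+t_{2m,2m-2}Q_{2m-2}(x)$; (4) $\frac{1}{u_m}\mathcal{A}_{\rm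 l}Q_{2m}(y)=-\frac{p_{2m+1}(y)}{h_{2m+1}}$.
   Context: $T\phi(x)=\phi(x+1)$, $\Delta\phi(x)=\phi(x+1)-\phi(x)$, $\nabla\phi(x)=\phi(x)-\phi(x-1)$. The $Q_k$ are skew orthogonal for $\langle\phi,\psi\rangle_{s,\omega}=\sum_{x\in\mathbb{Z}}[\phi(x)\psi(x+1)-\phi(x+1)\psi(x)]\omega(x)$ with $\langle Q_{2n},Q_{2m+1}\rangle_{s,\omega}=u_n\delta_{nm}$. *)

(* Defs.v *)
From HB Require Import structures.
From mathcomp Require Import all_boot all_order all_algebra all_fingroup.
From mathcomp Require Import all_classical all_reals.
From mathcomp Require Import topology normedtype sequences.
Set Implicit Arguments. Unset Strict Implicit. Unset Printing Implicit Defensive.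
Import Order.TTheory GRing.Theory Num.Theory.
Import numFieldTopology.Exports numFieldNormedType.Exports.
Local Open Scope ring_scope.
Local Open Scope classical_set_scope.

Section Defs.
Variable R : realType.

(* Sum over Z of a : int -> R, as (sum over x >= 0) + (sum over x < 0).
   All sums used below are absolutely convergent by the finite-moment
   hypothesis, so this is the usual sum over Z. *)
Definition zsum (a : int -> R) : R :=
  limn (series (fun n : nat => a (n%:Z))) +
  limn (series (fun n : nat => a (- (n.+1)%:Z))).

Definition finite_moments (rho : int -> R) : Prop :=
  forall k : nat,
    cvgn (series (fun n : nat => (n%:R) ^+ k * rho (n%:Z))) /\
    cvgn (series (fun n : nat => (n.+1%:R) ^+ k * rho (- (n.+1)%:Z))).

(* rho f vanishes at the end points of the support of rho:
   at a finite left end point a (rho(a-1) = 0) we have f(a) rho(a) = 0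
   (at a finite right end point b the boundary value f(b+1)rho(b+1) is 0
   since rho(b+1) = 0), and at infinite end points f rho tends to 0. *)
Definition vanish_at_endpoints (rho : int -> R) (f : {poly R}) : Prop :=
  [/\ forall x : int, rho (x - 1) = 0 -> f.[x%:~R] * rho x = 0,
      (fun n : nat => f.[n%:R] * rho (n%:Z)) @ \oo --> (0 : R) &
      (fun n : nat => f.[- (n%:R)] * rho (- (n%:Z))) @ \oo --> (0 : R)].

Definition Al (f g P : {poly R}) (y : R) : R :=
  g.[y] * P.[y + 1] + f.[y] * ((P.[y + 1] - P.[y]) + (P.[y] - P.[y - 1])).

Definition hnorm (rho : int -> R) (p : nat -> {poly R}) (n : nat) : R :=
  zsum (fun x => (p n).[x%:~R] * (p n).[x%:~R] * rho x).

Definition cc (rho : int -> R) (f g : {poly R}) (p : nat -> {poly R}) (n : nat) : R :=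
  - zsum (fun x => (p n.+1).[x%:~R] * Al f g (p n) (x%:~R) * rho x).

Definition omega (rho : int -> R) (f : {poly R}) (x : int) : R :=
  f.[(x + 1)%:~R] * rho (x + 1).

Definition skew_moments (rho : int -> R) (f : {poly R}) (m : nat) : 'M[R]_m :=
  \matrix_(i < m, j < m)
    zsum (fun x => ((x%:~R) ^+ i * (x%:~R + 1) ^+ j - (x%:~R + 1) ^+ i * (x%:~R) ^+ j)
                   * omega rho f x).

End Defs.

(* Pfaffian of a 2n x 2n matrix:
   Pf(A) = 1/(2^n n!) sum_{s in S_{2n}} sgn(s) prod_{i<n} A_{s(2i), s(2i+1)}. *)
Definition pf_fst (n : nat) (i : 'I_n) : 'I_(n.*2) :=
  Ordinal (etrans (ltn_double i n) (ltn_ord i)).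
Definition pf_snd (n : nat) (i : 'I_n) : 'I_(n.*2) :=
  Ordinal (etrans (ltn_Sdouble i n) (ltn_ord i)).

Definition pfaffian (R : fieldType) (n : nat) (A : 'M[R]_(n.*2)) : R :=
  (\sum_(s : 'S_(n.*2))
      (-1) ^+ s * \prod_(i < n) A (s (pf_fst i)) (s (pf_snd i)))
  / (2 ^ n * n`!)%:R.

Section Q.
Variable R : realType.
Variables (rho : int -> R) (f g : {poly R}) (p : nat -> {poly R}).
Local Notation c := (cc rho f g p).

Definition Qeven (n : nat) : {poly R} :=
  \sum_(0 <= l < n.+1) (\prod_(l <= j < n) (c j.*2.+1 / c j.*2)) *: p l.*2.
Definition Qodd (n : nat) : {poly R} := p n.*2.+1.
Definition Q (k : nat) : {poly R} := if odd k then Qodd k./2 else Qeven k./2.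

Definition u (n : nat) : R := c n.*2.
Definition tt (m : nat) : R := - c m.*2.-1 / c m.*2.-2.
End Q.

(* Main.v *)
Require Import Defs.
From HB Require Import structures.
From mathcomp Require Import all_boot all_order all_algebra all_fingroup.
From mathcomp Require Import all_classical all_reals.
From mathcomp Require Import topology normedtype sequences.
From mathcomp Require Import zify ring lra.
Set Implicit Arguments. Unset Strict Implicit. Unset Printing Implicit Defensive.
Import Order.TTheory GRing.Theory Num.Theory.
Import numFieldTopology.Exports numFieldNormedType.Exports.
Local Open Scope ring_scope.

Section Analytic.
Local Open Scope classical_set_scope.
Variable R : realType.
Implicit Types a b : int -> R.

Definition convZ a := cvgn (series (fun n : nat => a n%:Z)) /\
  cvgn (series (fun n : nat => a (- (n.+1)%:Z))).

Lemma zsumD a b : convZ a -> convZ b -> zsum (fun x => a x + b x) = zsum a + zsum b.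
Proof.
move=> [a1 a2] [b1 b2]; rewrite /zsum.
rewrite (lim_seriesD a1 b1) (lim_seriesD a2 b2).
by rewrite addrACA.
Qed.

Lemma convD a b : convZ a -> convZ b -> convZ (fun x => a x + b x).
Proof.
move=> [a1 a2] [b1 b2]; split; exact: is_cvg_seriesD.
Qed.

Lemma zsumZ k a : convZ a -> zsum (fun x => k * a x) = k * zsum a.
Proof.
move=> [a1 a2]; rewrite /zsum.
rewrite (lim_seriesZ k a1) (lim_seriesZ k a2).
by rewrite mulrDr.
Qed.

Lemma convZZ k a : convZ a -> convZ (fun x => k * a x).
Proof. move=> [a1 a2]; split; exact: is_cvg_seriesZ. Qed.


Lemma cvg_series_bigsum N (F : 'I_N -> nat -> R) :
  (forall i, cvgn (series (F i))) ->
  cvgn (series (fun n => \sum_(i < N) F i n)).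
Proof.
elim: N F => [|N IH] F hF.
  have -> : (fun n : nat => \sum_(i < 0) F i n) = 0.
    by apply: funext => n; rewrite big_ord0.
  have -> : series (0 : R^nat) = 0.
    by apply: funext => n; rewrite /series /= big1.
  exact: is_cvg_cst.
have -> : (fun n : nat => \sum_(i < N.+1) F i n) =
   (fun n => \sum_(i < N) F (widen_ord (leqnSn N) i) n) + F ord_max.
  by apply: funext => n; rewrite big_ord_recr.
apply: is_cvg_seriesD => //; exact: IH.
Qed.

Lemma cvg_seriesZ' k (u : nat -> R) : cvgn (series u) ->
  cvgn (series (fun n => k * u n)).
Proof.
move=> h.
have -> : series (fun n => k * u n) = (fun=> k) \* series u.
  by apply: funext => N; rewrite /series /= mulr_sumr.
apply: is_cvgM => //; exact: is_cvg_cst.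
Qed.

Lemma conv_poly (rho : int -> R) : finite_moments rho ->
  forall P : {poly R}, convZ (fun x => P.[x%:~R] * rho x).
Proof.
move=> hm P; split.
  have -> : (fun n : nat => P.[(n%:Z)%:~R] * rho n) =
     (fun n => \sum_(i < size P) P`_i * ((n%:R) ^+ i * rho n)).
    apply: funext => n; rewrite horner_coef mulr_suml.
    by apply: eq_bigr => i _; rewrite mulrA.
  apply: cvg_series_bigsum => i; apply: cvg_seriesZ'; exact: (hm i).1.
have -> : (fun n : nat => P.[(- (n.+1)%:Z)%:~R] * rho (- (n.+1)%:Z)) =
   (fun n => \sum_(i < size P) (P`_i * (-1) ^+ i) * ((n.+1%:R) ^+ i * rho (- (n.+1)%:Z))).
  apply: funext => n; rewrite horner_coef mulr_suml.
  have e : (- (n.+1)%:Z)%:~R = - (n.+1%:R) :> R by rewrite mulrNz.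
  apply: eq_bigr => i _; by rewrite e (exprNn (n.+1%:R)) !mulrA.
apply: (cvg_series_bigsum (F := fun i n => (P`_i * (-1) ^+ i) * ((n.+1%:R) ^+ i * rho (- (n.+1)%:Z)))) => i.
apply: cvg_seriesZ'; exact: (hm i).2.
Qed.

Section Tele.
Variable rho : int -> R.
Hypothesis hm : finite_moments rho.
Variable T : {poly R}.
Let a (x : int) := T.[x%:~R] * rho x.

Lemma a_pos0 : (fun n : nat => a n) @ \oo --> 0.
Proof. exact: (cvg_series_cvg_0 (conv_poly hm T).1). Qed.

Lemma a_neg0 : (fun n : nat => a (- (n%:Z))) @ \oo --> 0.
Proof.
rewrite -cvg_shiftS /=.
exact: (cvg_series_cvg_0 (conv_poly hm T).2).
Qed.

Lemma tele_pos : series (fun n : nat => a (n%:Z + 1) - a n) @ \oo --> - a 0.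
Proof.
have -> : series (fun n : nat => a (n%:Z + 1) - a n) = (fun N : nat => a N - a 0).
  apply: funext => N; rewrite /series /=.
  apply: (telescope_sumr_eq (fun k : nat => a k)) => // k _.
  by rewrite -addn1 PoszD.
suff: (fun N : nat => a N - a 0) @ \oo --> 0 - a 0 by rewrite sub0r.
apply: cvgB; [exact: a_pos0 | exact: cvg_cst].
Qed.

Lemma tele_neg : series (fun n : nat => a (- (n.+1)%:Z + 1) - a (- (n.+1)%:Z)) @ \oo --> a 0.
Proof.
have -> : series (fun n : nat => a (- (n.+1)%:Z + 1) - a (- (n.+1)%:Z)) =
    (fun N : nat => a 0 - a (- (N%:Z))).
  apply: funext => N; rewrite /series /=.
  have -> : \sum_(0 <= k < N) (a (- (k.+1)%:Z + 1) - a (- (k.+1)%:Z)) =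
     - \sum_(0 <= k < N) (a (- (k.+1)%:Z) - a (- (k%:Z))).
    rewrite -sumrN; apply: eq_bigr => k _.
    have -> : - (k.+1)%:Z + 1 = - (k%:Z) by lia.
    by rewrite opprB.
  rewrite (telescope_sumr_eq (fun k : nat => a (- (k%:Z)))) // opprB.
  by [].

suff: (fun N : nat => a 0 - a (- (N%:Z))) @ \oo --> a 0 - 0 by rewrite subr0.
apply: cvgB; [exact: cvg_cst | exact: a_neg0].
Qed.

Lemma tele_conv : convZ (fun x => a (x + 1) - a x).
Proof.
split; apply/cvg_ex; [exists (- a 0); exact: tele_pos | exists (a 0); exact: tele_neg].
Qed.

Lemma tele_zsum : zsum (fun x => a (x + 1) - a x) = 0.
Proof.
rewrite /zsum (cvg_lim _ tele_pos) // (cvg_lim _ tele_neg) //.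
by rewrite addNr.
Qed.
End Tele.

End Analytic.

Section Forms.
Variable R : realType.
Variables (rho : int -> R) (f g : {poly R}).
Hypothesis hm : finite_moments rho.
Hypothesis pearson : forall x : int,
     f.[(x + 1)%:~R] * rho (x + 1) - f.[x%:~R] * rho x = g.[x%:~R] * rho x.

Definition Bf (P Q : {poly R}) := zsum (fun x => P.[x%:~R] * Q.[x%:~R] * rho x).
Definition Ap (P : {poly R}) := g * (P \Po ('X + 1)) + f * ((P \Po ('X + 1)) - (P \Po ('X - 1))).
Definition Kf P Q := Bf P (Ap Q).

Lemma intS1 (x : int) : (x + 1)%:~R = x%:~R + 1 :> R.
Proof. by rewrite intrD. Qed.

Lemma hcompP (P : {poly R}) (y : R) : (P \Po ('X + 1)).[y] = P.[y + 1].
Proof. by rewrite horner_comp !hornerE. Qed.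
Lemma hcompM (P : {poly R}) (y : R) : (P \Po ('X - 1)).[y] = P.[y - 1].
Proof. by rewrite horner_comp !hornerE. Qed.

Lemma AlE P y : Al f g P y = (Ap P).[y].
Proof.
rewrite /Al /Ap hornerD !hornerM hornerD hornerN hcompP hcompM.
ring.
Qed.

Lemma convPQ P Q : convZ (fun x => P.[x%:~R] * Q.[x%:~R] * rho x).
Proof.
have -> : (fun x => P.[x%:~R] * Q.[x%:~R] * rho x) = (fun x => (P * Q).[x%:~R] * rho x).
  by apply: funext => x; rewrite hornerM.
exact: conv_poly.
Qed.

Lemma BfC P Q : Bf P Q = Bf Q P.
Proof. by congr zsum; apply: funext => x; rewrite (mulrC P.[_]). Qed.

Lemma BfDr P a Q1 Q2 : Bf P (a *: Q1 + Q2) = a * Bf P Q1 + Bf P Q2.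
Proof.
rewrite /Bf -(zsumZ a (convPQ P Q1)) -zsumD; last exact: convPQ; last exact: convZZ (convPQ _ _).
by congr zsum; apply: funext => x; rewrite hornerD hornerZ; ring.
Qed.

Lemma BfDl P a Q1 Q2 : Bf (a *: Q1 + Q2) P = a * Bf Q1 P + Bf Q2 P.
Proof. by rewrite BfC BfDr !(BfC P). Qed.

Lemma Bf0r P : Bf P 0 = 0.
Proof.
have := BfDr P 1 0 0; rewrite addr0 scaler0 mul1r => h.
have : Bf P 0 + Bf P 0 = Bf P 0 + 0 by rewrite addr0 -h.
by move/addrI.
Qed.

Lemma ApD a P Q : Ap (a *: P + Q) = a *: Ap P + Ap Q.
Proof.
rewrite /Ap !comp_polyD !comp_polyZ -!mul_polyC; ring.
Qed.

Lemma Ap0 : Ap 0 = 0.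
Proof. by rewrite /Ap !comp_poly0 !subr0 !mulr0 addr0. Qed.

Lemma KfDr P a Q1 Q2 : Kf P (a *: Q1 + Q2) = a * Kf P Q1 + Kf P Q2.
Proof. by rewrite /Kf ApD BfDr. Qed.

Lemma KfDl P a Q1 Q2 : Kf (a *: Q1 + Q2) P = a * Kf Q1 P + Kf Q2 P.
Proof. by rewrite /Kf BfDl. Qed.

Lemma Kf_anti P Q : Kf P Q = - Kf Q P.
Proof.
apply/eqP; rewrite -subr_eq0 opprK; apply/eqP.
pose T := f * (P * (Q \Po ('X - 1)) + Q * (P \Po ('X - 1))).
rewrite /Kf /Bf -zsumD; [|exact: convPQ|exact: convPQ].
rewrite -(tele_zsum hm T).
congr zsum; apply: funext => x.
have hw := pearson x.
set xr := x%:~R in hw *.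
have e1 : T.[(x + 1)%:~R] * rho (x + 1) =
   (f.[(x + 1)%:~R] * rho (x + 1)) * (P.[xr + 1] * Q.[xr] + Q.[xr + 1] * P.[xr]).
  rewrite /T intS1 -/xr !hornerE !horner_comp !hornerE addrK; ring.
rewrite e1.
have -> : f.[(x + 1)%:~R] * rho (x + 1) = g.[xr] * rho x + f.[xr] * rho x.
  by rewrite -hw subrK.
rewrite /T /Ap !hornerE !horner_comp !hornerE; ring.
Qed.

Lemma Kf_skew P Q : zsum (fun x => (P.[x%:~R] * Q.[x%:~R + 1] - P.[x%:~R + 1] * Q.[x%:~R]) * omega rho f x)
  = Kf P Q.
Proof.
pose T := f * P * (Q \Po ('X - 1)).
pose a x := T.[x%:~R] * rho x.
have -> : (fun x => (P.[x%:~R] * Q.[x%:~R + 1] - P.[x%:~R + 1] * Q.[x%:~R]) * omega rho f x)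
   = (fun x => P.[x%:~R] * (Ap Q).[x%:~R] * rho x + (-1) * (a (x + 1) - a x)).
  apply: funext => x.
  have hw := pearson x.
  set xr := x%:~R in hw *.
  have e1 : a (x + 1) = (f.[(x + 1)%:~R] * rho (x + 1)) * (P.[xr + 1] * Q.[xr]).
    rewrite /a /T intS1 -/xr !hornerM hcompM addrK; ring.
  rewrite e1 /omega.
  have -> : f.[(x + 1)%:~R] * rho (x + 1) = g.[xr] * rho x + f.[xr] * rho x.
    by rewrite -hw subrK.
  rewrite /a /T -AlE /Al !hornerM hcompM; ring.
have h1 := tele_conv hm T; have h2 := tele_zsum hm T.
rewrite /= in h1 h2; rewrite /a.
rewrite zsumD; [| exact: convPQ | exact: convZZ h1].
by rewrite zsumZ // h2 mulr0 addr0.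
Qed.

End Forms.

Section Shift.
Variable R : realType.

Lemma size_shift_diff (P : {poly R}) :
  (size ((P \Po ('X + 1)) - (P \Po ('X - 1)))%R <= (size P).-1)%N.
Proof.
have s1 : size ('X + 1 : {poly R}) = 2 by rewrite -polyC1 size_XaddC.
have s2 : size ('X - 1 : {poly R}) = 2 by rewrite -polyC1 size_XsubC.
have l1 : lead_coef ('X + 1 : {poly R}) = 1 by rewrite -polyC1 lead_coefXaddC.
have l2 : lead_coef ('X - 1 : {poly R}) = 1 by rewrite -polyC1 lead_coefXsubC.
apply/leq_sizeP => j hj; rewrite coefB.
have e1 := size_comp_poly2 P s1; have e2 := size_comp_poly2 P s2.
case: (ltngtP j (size P).-1) => hj'.
- by move: hj; rewrite leqNgt hj'.
- have hs : (size P <= j)%N by lia.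
  by rewrite !(leq_sizeP _ _ _ _ hs) ?subr0 ?e1 ?e2.
- rewrite hj'.
  have c1 : (P \Po ('X + 1))`_(size P).-1 = lead_coef P.
    by rewrite -{1}e1 -lead_coefE lead_coef_comp ?s1 // l1 expr1n mulr1.
  have c2 : (P \Po ('X - 1))`_(size P).-1 = lead_coef P.
    by rewrite -{1}e2 -lead_coefE lead_coef_comp ?s2 // l2 expr1n mulr1.
  by rewrite c1 c2 subrr.
Qed.
End Shift.

Section Poly.
Variable R : realType.
Variables (rho : int -> R) (f g : {poly R}) (p : nat -> {poly R}).
Hypothesis hm : finite_moments rho.
Hypothesis pearson : forall x : int,
     f.[(x + 1)%:~R] * rho (x + 1) - f.[x%:~R] * rho x = g.[x%:~R] * rho x.
Hypothesis deg_f : (size f <= 3)%N.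
Hypothesis deg_g : (size g <= 2)%N.
Hypothesis p_monic : forall n, p n \is monic.
Hypothesis p_size : forall n, size (p n) = n.+1.
Hypothesis p_orth : forall m n, m != n ->
     zsum (fun x => (p m).[x%:~R] * (p n).[x%:~R] * rho x) = 0.
Hypothesis h_pos : forall n, 0 < hnorm rho p n.

Local Notation B := (Bf rho).
Local Notation K := (Kf rho f g).
Local Notation A := (Ap f g).
Local Notation h := (hnorm rho p).
Local Notation c := (cc rho f g p).

Lemma BfZ P a Q : B P (a *: Q) = a * B P Q.
Proof. by have := BfDr hm P a Q 0; rewrite !addr0 (Bf0r hm) addr0. Qed.
Lemma BfD P Q1 Q2 : B P (Q1 + Q2) = B P Q1 + B P Q2.
Proof. by have := BfDr hm P 1 Q1 Q2; rewrite scale1r mul1r. Qed.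
Lemma BfB P Q1 Q2 : B P (Q1 - Q2) = B P Q1 - B P Q2.
Proof. by rewrite BfD -scaleN1r BfZ mulN1r. Qed.

Lemma KfZ P a Q : K P (a *: Q) = a * K P Q.
Proof. by rewrite /Kf -(addr0 (a *: Q)) ApD Ap0 addr0 BfZ. Qed.
Lemma KfD P Q1 Q2 : K P (Q1 + Q2) = K P Q1 + K P Q2.
Proof. by rewrite /Kf -{1}(scale1r Q1) ApD scale1r BfD. Qed.

Lemma Borth m n : m != n -> B (p m) (p n) = 0.
Proof. exact: p_orth. Qed.

Lemma hE n : h n = B (p n) (p n).
Proof. by []. Qed.

Lemma h_neq0 n : h n != 0.
Proof. by have := h_pos n; rewrite lt0r => /andP[]. Qed.

Lemma size_lower (P : {poly R}) k : (size P <= k.+1)%N ->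
  (size (P - P`_k *: p k)%R <= k)%N.
Proof.
move=> hs; apply/leq_sizeP => j hj; rewrite coefB coefZ.
case: (ltngtP j k) => hjk.
- by move: hj; rewrite leqNgt hjk.
- have hs' : (size P <= j)%N by lia.
  have hs2 : (size (p k) <= j)%N by rewrite p_size.
  by rewrite (nth_default _ hs') (nth_default _ hs2) mulr0 subr0.
- have : lead_coef (p k) = 1 by apply/monicP.
  by rewrite lead_coefE p_size /= -hjk => ->; rewrite mulr1 subrr.
Qed.

Lemma orth_low n (P : {poly R}) : (size P <= n)%N -> B (p n) P = 0.
Proof.
move=> hs.
suff H : forall k, (k <= n)%N -> forall P : {poly R}, (size P <= k)%N -> B (p n) P = 0 by exact: (H n).
elim=> [|k IH] hk Q hQ.
  move: hQ; rewrite leqn0 size_poly_eq0 => /eqP ->; exact: Bf0r.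
have -> : Q = Q`_k *: p k + (Q - Q`_k *: p k) by rewrite addrC subrK.
rewrite BfDr // Borth ?mulr0 ?add0r.
  apply: IH; [lia | exact: size_lower].
apply/eqP; lia.
Qed.

Lemma orth_zero N (P : {poly R}) : (size P <= N)%N -> (forall j, (j < N)%N -> B (p j) P = 0) -> P = 0.
Proof.
elim: N P => [|N IH] P hs hj.
  by move: hs; rewrite leqn0 size_poly_eq0 => /eqP.
have e : P - P`_N *: p N = 0.
  apply: IH; first exact: size_lower.
  move=> j hjN; rewrite BfB BfZ hj ?Borth ?mulr0 ?subr0 //; [apply/eqP; lia | lia].
have hP : P = P`_N *: p N by apply/eqP; rewrite -subr_eq0 e.
have := hj N (ltnSn N); rewrite {1}hP BfZ -hE => /eqP.
rewrite mulf_eq0 (negbTE (h_neq0 N)) orbF => /eqP hc.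
by rewrite hP hc scale0r.
Qed.

Lemma size_Ap (P : {poly R}) : (size (A P) <= (size P).+1)%N.
Proof.
have [->|nz] := eqVneq P 0; first by rewrite Ap0 size_poly0.
have sP : (0 < size P)%N by rewrite size_poly_gt0.
have s1 : size (P \Po ('X + 1)) = size P by rewrite size_comp_poly2 // -polyC1 size_XaddC.
rewrite /Ap; apply: leq_trans (size_polyD _ _) _.
rewrite geq_max; apply/andP; split.
  apply: leq_trans (size_polyMleq _ _) _.
  rewrite s1; lia.
apply: leq_trans (size_polyMleq _ _) _.
have := size_shift_diff P; lia.
Qed.

Lemma K_low a b : (b.+1 < a)%N -> K (p a) (p b) = 0.
Proof.
move=> hab; apply: orth_low.
apply: leq_trans (size_Ap _) _; rewrite p_size; lia.
Qed.

Lemma K_diag a : K (p a) (p a) = 0.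
Proof. have := Kf_anti hm pearson (p a) (p a); lra. Qed.

Lemma ccE n : c n = - K (p n.+1) (p n).
Proof.
rewrite /cc /Kf /Bf; congr (- zsum _); apply: funext => x.
by rewrite AlE.
Qed.


Lemma kE P Q : B P (A Q) = K P Q.
Proof. by []. Qed.

Lemma AexpS n : A (p n.+1) = (- c n.+1 / h n.+2) *: p n.+2 + (c n / h n) *: p n.
Proof.
apply/eqP; rewrite -subr_eq0; apply/eqP.
apply: (@orth_zero n.+3).
  rewrite (leq_trans (size_polyD _ _)) // geq_max (leq_trans (size_Ap _)) ?p_size //.
  rewrite size_polyN (leq_trans (size_polyD _ _)) // geq_max.
  by rewrite !(leq_trans (size_scale_leq _ _)) ?p_size //; lia.
move=> j hj; rewrite BfB kE BfD !BfZ.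
have hn := h_neq0 n; have hn2 := h_neq0 n.+2.
have [jlt|jgt|->] := ltngtP j n.
- rewrite (Kf_anti hm pearson) K_low // !Borth; first by rewrite !mulr0 addr0 subr0 oppr0.
  + apply/eqP; lia.
  + apply/eqP; lia.
- have [->|->] : j = n.+1 \/ j = n.+2 by lia.
  + rewrite K_diag !Borth; first by rewrite !mulr0 addr0 subr0.
    * apply/eqP; lia.
    * apply/eqP; lia.
  + rewrite (Borth (m:=n.+2) (n:=n)); last by apply/eqP; lia.
    rewrite -hE ccE; field; rewrite ?hn ?hn2 ?h_neq0 //.
- rewrite (Borth (m:=n) (n:=n.+2)); last by apply/eqP; lia.
  rewrite -hE (Kf_anti hm pearson) -ccE; field; rewrite ?hn ?hn2 ?h_neq0 //.
Qed.

Lemma Aexp0 : A (p 0) = (- c 0 / h 1) *: p 1.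
Proof.
apply/eqP; rewrite -subr_eq0; apply/eqP.
apply: (@orth_zero 2).
  rewrite (leq_trans (size_polyD _ _)) // geq_max (leq_trans (size_Ap _)) ?p_size //.
  by rewrite size_polyN (leq_trans (size_scale_leq _ _)) ?p_size.
move=> j hj; rewrite BfB kE !BfZ.
have hn2 := h_neq0 1.
have [->|->] : j = 0%N \/ j = 1%N by lia.
- by rewrite K_diag Borth // mulr0 subr0.
- by rewrite -hE ccE; field; rewrite ?hn ?hn2 ?h_neq0 //.
Qed.

End Poly.

Section Pf.
Variable R : realType.
Variable V : lmodType R.
Variable K : V -> V -> R.
Hypothesis KDl : forall a u v w, K (a *: u + v) w = a * K u w + K v w.
Hypothesis KDr : forall a u v w, K w (a *: u + v) = a * K w u + K w v.
Variable n : nat.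
Local Notation I := ('I_(n.*2)).

Definition Pprod (s : {perm I}) (w : I -> V) :=
  \prod_(i < n) K (w (s (pf_fst i))) (w (s (pf_snd i))).
Definition Phi (w : I -> V) := \sum_(s : {perm I}) (-1) ^+ s * Pprod s w.
Definition upd (w : I -> V) (r : I) (u : V) : I -> V := fun t => if t == r then u else w t.

Lemma split_i0 (s : {perm I}) (r : I) : exists i0 : 'I_n,
  ((s (pf_fst i0) == r) || (s (pf_snd i0) == r)) /\
  (forall i, i != i0 -> s (pf_fst i) != r /\ s (pf_snd i) != r).
Proof.
pose j := (s^-1)%g r.
have hj : (j < n.*2)%N := ltn_ord j.
have hq : (j./2 < n)%N by rewrite ltn_half_double.
have ho := odd_double_half j.
have sE : forall x, (s x == r) = (x == j).
  move=> x; apply/eqP/eqP => [h|->]; [by rewrite /j -h permK | by rewrite /j permKV].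
exists (Ordinal hq); split.
  rewrite !sE; apply/orP; case: (odd j) ho => /= ho; [right|left];
    apply/eqP; apply: val_inj => /=; lia.
move=> i hi; rewrite !sE; split; apply/eqP => e; move: hi => /eqP; apply;
  apply: val_inj => /=; have := congr1 val e => /= e'; lia.
Qed.


Lemma fst_snd_neq (i : 'I_n) : pf_fst i != pf_snd i :> I.
Proof. apply/eqP => e; have := congr1 val e => /=; lia. Qed.

Lemma Pprod_split s w i0 : Pprod s w = K (w (s (pf_fst i0))) (w (s (pf_snd i0))) *
  \prod_(i < n | i != i0) K (w (s (pf_fst i))) (w (s (pf_snd i))).
Proof. by rewrite /Pprod (bigD1 i0). Qed.

Lemma Pprod_lin s w r a u v :
  Pprod s (upd w r (a *: u + v)) = a * Pprod s (upd w r u) + Pprod s (upd w r v).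
Proof.
have [i0 [h0 hi]] := split_i0 s r.
rewrite !(Pprod_split s _ i0).
have rest : forall u', \prod_(i < n | i != i0) K (upd w r u' (s (pf_fst i))) (upd w r u' (s (pf_snd i)))
   = \prod_(i < n | i != i0) K (w (s (pf_fst i))) (w (s (pf_snd i))).
  move=> u'; apply: eq_bigr => i /hi [e1 e2]; by rewrite /upd (negbTE e1) (negbTE e2).
rewrite !rest.
have hne : s (pf_fst i0) != s (pf_snd i0) by rewrite (inj_eq perm_inj) fst_snd_neq.
case/orP: h0 => /eqP e.
- have e2 : s (pf_snd i0) != r by rewrite -e eq_sym.
  rewrite /upd e eqxx (negbTE e2) KDl; ring.
- have e1 : s (pf_fst i0) != r by rewrite -e.
  rewrite /upd e eqxx (negbTE e1) KDr; ring.
Qed.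

Lemma Pprod_zero s w r : (forall t, t != r -> K (w t) (w r) = 0 /\ K (w r) (w t) = 0) ->
  Pprod s w = 0.
Proof.
move=> hK; have [i0 [h0 hi]] := split_i0 s r.
rewrite (Pprod_split s _ i0).
have hne : s (pf_fst i0) != s (pf_snd i0) by rewrite (inj_eq perm_inj) fst_snd_neq.
case/orP: h0 => /eqP e.
- have e2 : s (pf_snd i0) != r by rewrite -e eq_sym.
  by rewrite e (hK _ e2).2 mul0r.
- have e1 : s (pf_fst i0) != r by rewrite -e.
  by rewrite e (hK _ e1).1 mul0r.
Qed.

Lemma Phi_lin w r a u v :
  Phi (upd w r (a *: u + v)) = a * Phi (upd w r u) + Phi (upd w r v).
Proof.
rewrite /Phi mulr_sumr -big_split /=; apply: eq_bigr => s _.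
rewrite Pprod_lin mulrDr mulrA mulrA (mulrC a).
by [].
Qed.

Lemma Phi_alt w a b : a != b -> w a = w b -> Phi w = 0.
Proof.
move=> hab hw.
have e : Phi w = - Phi w.
  rewrite {1}/Phi (reindex_inj (mulIg (tperm a b))) /= /Phi -sumrN.
  apply: eq_bigr => s _.
  have -> : Pprod (s * tperm a b)%g w = Pprod s w.
    rewrite /Pprod; apply: eq_bigr => i _; rewrite !permM.
    have wt : forall y, w (tperm a b y) = w y.
      by move=> y; case: tpermP => [->|->|//]; rewrite hw.
    by rewrite !wt.
  by rewrite odd_permM odd_tperm hab signr_addb expr1 mulrN1 mulNr.
lra.
Qed.

Lemma Phi_zero w r : (forall t, t != r -> K (w t) (w r) = 0 /\ K (w r) (w t) = 0) ->
  Phi w = 0.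
Proof. by move=> h; rewrite /Phi big1 // => s _; rewrite (Pprod_zero s h) mulr0. Qed.

Lemma Phi_upd0 w r : Phi (upd w r 0) = 0.
Proof. have := Phi_lin w r 1 0 0; rewrite scaler0 addr0 mul1r; lra. Qed.

Lemma Phi_vanish w r (q : V) (d : I -> R) :
  q = \sum_(t < n.*2) d t *: w t -> d r = 1 ->
  (forall t, t != r -> K (w t) q = 0 /\ K q (w t) = 0) -> Phi w = 0.
Proof.
move=> hq hd hK.
have h0 : Phi (upd w r q) = 0.
  apply: (Phi_zero (r := r)) => t ht; rewrite /upd eqxx (negbTE ht); exact: hK.
have hsum : forall ts : seq I, Phi (upd w r (\sum_(t <- ts) d t *: w t)) =
    \sum_(t <- ts) d t * Phi (upd w r (w t)).
  elim=> [|x ts IH]; first by rewrite !big_nil Phi_upd0.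
  by rewrite !big_cons Phi_lin IH.
rewrite hq (hsum (index_enum I)) in h0.
rewrite (bigD1 r) //= big1 ?addr0 in h0; last first.
  move=> t ht; rewrite (@Phi_alt _ t r) ?mulr0 //.
  by rewrite /upd eqxx (negbTE ht).
have e2 : upd w r (w r) = w.
  by apply: funext => t; rewrite /upd; case: eqP => [->|].
by rewrite e2 hd mul1r in h0.
Qed.

End Pf.

Section Main.
Variable R : realType.
Variables (rho : int -> R) (f g : {poly R}) (p : nat -> {poly R}).
Hypothesis hm : finite_moments rho.
Hypothesis pearson : forall x : int,
     f.[(x + 1)%:~R] * rho (x + 1) - f.[x%:~R] * rho x = g.[x%:~R] * rho x.
Hypothesis deg_f : (size f <= 3)%N.
Hypothesis deg_g : (size g <= 2)%N.
Hypothesis p_monic : forall n, p n \is monic.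
Hypothesis p_size : forall n, size (p n) = n.+1.
Hypothesis p_orth : forall m n, m != n ->
     zsum (fun x => (p m).[x%:~R] * (p n).[x%:~R] * rho x) = 0.
Hypothesis h_pos : forall n, 0 < hnorm rho p n.
Hypothesis pf_nz : forall n, (1 <= n)%N -> pfaffian (skew_moments rho f n.*2) != 0.

Local Notation B := (Bf rho).
Local Notation K := (Kf rho f g).
Local Notation A := (Ap f g).
Local Notation h := (hnorm rho p).
Local Notation c := (cc rho f g p).

Let olow := orth_low (f:=f) (g:=g) hm deg_f deg_g p_monic p_size p_orth.
Let Aexp := AexpS hm pearson deg_f deg_g p_monic p_size p_orth h_pos.
Let Aexp0' := Aexp0 hm pearson deg_f deg_g p_monic p_size p_orth h_pos.

Lemma c_even_neq0 k : c (k.*2) != 0.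
Proof.
apply/negP => /eqP hc.
have := pf_nz (n := k.+1) isT.
apply/negP; rewrite negbK.
rewrite /pfaffian mulf_eq0; apply/orP; left; apply/eqP.
have -> : \sum_(s : 'S_(k.+1.*2)) (-1) ^+ s *
     \prod_(i < k.+1) (skew_moments rho f (k.+1).*2) (s (pf_fst i)) (s (pf_snd i))
   = Phi K (fun t : 'I_(k.+1.*2) => 'X^t).
  rewrite /Phi; apply: eq_bigr => s _; congr (_ * _); apply: eq_bigr => i _.
  rewrite mxE -(Kf_skew hm pearson); congr zsum; apply: funext => x.
  by rewrite !hornerXn.
have hr : (k.*2.+1 < (k.+1).*2)%N by rewrite doubleS.
have KDl' : forall a u v w, K (a *: u + v) w = a * K u w + K v w.
  by move=> a u v w; rewrite KfDl.
have KDr' : forall a u v w, K w (a *: u + v) = a * K w u + K w v.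
  by move=> a u v w; rewrite KfDr.
have KX : forall t : 'I_(k.+1.*2), K ('X^t) (p k.*2.+1) = 0.
  move=> t; rewrite /Kf Aexp hc.
  rewrite mul0r scale0r addr0 BfZ // BfC olow ?mulr0 //.
  rewrite size_polyXn; have ht : (t < k.*2.+2)%N := ltn_ord t; lia.
apply: (Phi_vanish KDl' KDr' (r := Ordinal hr) (q := p k.*2.+1)
   (d := fun t => (p k.*2.+1)`_t)).
- by rewrite -{1}(coefK (p _)) p_size poly_def.
- have := p_monic k.*2.+1 => /monicP; by rewrite lead_coefE p_size.
- move=> t _; rewrite KX; split => //.
  by rewrite (Kf_anti hm pearson) KX oppr0.
Qed.


Lemma Q_odd m : Q rho f g p m.*2.+1 = p m.*2.+1.
Proof. by rewrite /Q /Qodd /= odd_double /= uphalf_double. Qed.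

Lemma Q_even m : Q rho f g p m.*2 = Qeven rho f g p m.
Proof. by rewrite /Q odd_double doubleK. Qed.

Lemma Qeven0 : Qeven rho f g p 0 = p 0.
Proof. by rewrite /Qeven big_nat1 big_geq // scale1r. Qed.

Lemma QevenS n : Qeven rho f g p n.+1 =
  p (n.+1).*2 + (c n.*2.+1 / c n.*2) *: Qeven rho f g p n.
Proof.
have e0 : \prod_(n.+1 <= j < n.+1) (c j.*2.+1 / c j.*2) = 1 by rewrite big_geq.
rewrite /Qeven big_nat_recr //= e0 scale1r addrC; congr (_ + _).
rewrite scaler_sumr; apply: eq_big_nat => l hl.
have hl' : (l <= n)%N by move: hl => /andP [_ hl]; lia.
by rewrite (big_nat_recr _ _ _ hl') /= scalerA mulrC.
Qed.

Lemma AQeven m : A (Qeven rho f g p m) = (- c m.*2 / h m.*2.+1) *: p m.*2.+1.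
Proof.
elim: m => [|m IH]; first by rewrite Qeven0 Aexp0'.
rewrite QevenS addrC ApD IH doubleS Aexp scalerA addrCA -scalerDl.
have -> : c m.*2.+1 / c m.*2 * (- c m.*2 / h m.*2.+1) + c m.*2.+1 / h m.*2.+1 = 0.
  have := c_even_neq0 m; have := h_neq0 h_pos m.*2.+1 => h1 h2; field.
  by rewrite h1 h2.
by rewrite scale0r addr0.
Qed.


Lemma ttS m : tt rho f g p m.+1 = - (c m.*2.+1 / c m.*2).
Proof. by rewrite /tt doubleS mulNr. Qed.

Lemma main_prop m :
  [/\ p m.*2.+1 = Q rho f g p m.*2.+1,
      (forall y : R,
         (u rho f g p m)^-1 * Al f g (Q rho f g p m.*2.+1) y =
         (p m.*2).[y] / hnorm rho p m.*2
         + tt rho f g p m.+1 * ((p m.+1.*2).[y] / hnorm rho p m.+1.*2)),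
      p m.*2 = Q rho f g p m.*2
               + (if m is m'.+1 then tt rho f g p m *: Q rho f g p m'.*2 else 0) &
      (forall y : R,
         (u rho f g p m)^-1 * Al f g (Q rho f g p m.*2) y =
         - ((p m.*2.+1).[y] / hnorm rho p m.*2.+1))].
Proof.
have hc := c_even_neq0 m.
split.
- by rewrite Q_odd.
- move=> y; rewrite Q_odd AlE Aexp hornerD !hornerZ /u ttS doubleS.
  have h1 := h_neq0 h_pos m.*2; have h2 := h_neq0 h_pos m.*2.+2.
  field; by rewrite hc h1 h2.
- rewrite Q_even; case: m hc => [|m] hc; first by rewrite Qeven0 addr0.
  rewrite Q_even QevenS ttS -addrA -scalerDl addrN scale0r addr0.
  by [].
- move=> y; rewrite Q_even AlE AQeven hornerZ /u.
  have h1 := h_neq0 h_pos m.*2.+1.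
  field; by rewrite hc h1.
Qed.

End Main.

Unset Implicit Arguments. Set Strict Implicit. Set Printing Implicit Defensive.

Theorem proposition3p11 (R : realType) (rho : int -> R) (f g : {poly R})
  (p : nat -> {poly R})
  (rho_ge0 : forall x : int, 0 <= rho x)
  (rho_mom : finite_moments rho)
  (deg_f : (size f <= 3)%N) (deg_g : (size g <= 2)%N)
  (pearson : forall x : int,
     f.[(x + 1)%:~R] * rho (x + 1) - f.[x%:~R] * rho x = g.[x%:~R] * rho x)
  (bdry : vanish_at_endpoints rho f)
  (p_monic : forall n, p n \is monic)
  (p_size : forall n, size (p n) = n.+1)
  (p_orth : forall m n, m != n ->
     zsum (fun x => (p m).[x%:~R] * (p n).[x%:~R] * rho x) = 0)
  (h_pos : forall n, 0 < hnorm rho p n)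
  (pf_nz : forall n, (1 <= n)%N -> pfaffian (skew_moments rho f n.*2) != 0) :
  forall m : nat,
  [/\ (* (1) *)
      p m.*2.+1 = Q rho f g p m.*2.+1,
      (* (2) *)
      (forall y : R,
         (u rho f g p m)^-1 * Al f g (Q rho f g p m.*2.+1) y =
         (p m.*2).[y] / hnorm rho p m.*2
         + tt rho f g p m.+1 * ((p m.+1.*2).[y] / hnorm rho p m.+1.*2)),
      (* (3) *)
      p m.*2 = Q rho f g p m.*2
               + (if m is m'.+1 then tt rho f g p m *: Q rho f g p m'.*2 else 0) &
      (* (4) *)
      (forall y : R,
         (u rho f g p m)^-1 * Al f g (Q rho f g p m.*2) y =
         - ((p m.*2.+1).[y] / hnorm rho p m.*2.+1))].
Proof.
move=> m.
exact: (main_prop rho_mom pearson deg_f deg_g p_monic p_size p_orth h_pos pf_nz m).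
Qed.
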